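(* Let $(Q,\cdot,e)$ be a double Ward quasigroup and let $x\,\bar{\cdot}\,y=y\cdot x$ be the dual operation. Then $(Q,\bar{\cdot},e)$ is a double Ward quasigroup.
   Context: A quasigroup is a magma in which $ax=b$ and $ya=b$ have unique solutions for all $a,b$. A double Ward quasigroup $(Q,\cdot,e)$ is a quasigroup with an element $e$ such that $(ee\cdot xz)(ey\cdot z)=xy$ for all $x,y,z\in Q$. *)

(* Defs.v *)
Definition is_quasigroup {Q : Type} (mul : Q -> Q -> Q) : Prop :=
  (forall a b : Q, exists! x : Q, mul a x = b) /\
  (forall a b : Q, exists! y : Q, mul y a = b).

Definition double_ward_quasigroup {Q : Type} (mul : Q -> Q -> Q) (e : Q) : Prop :=
  is_quasigroup mul /\
  forall x y z : Q,
    mul (mul (mul e e) (mul x z)) (mul (mul e y) z) = mul x y.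

Definition dual_op {Q : Type} (mul : Q -> Q -> Q) : Q -> Q -> Q :=
  fun x y => mul y x.

(* Main.v *)
Require Import Defs.

Theorem theorem4p9 (Q : Type) (mul : Q -> Q -> Q) (e : Q) :
  double_ward_quasigroup mul e -> double_ward_quasigroup (dual_op mul) e.
Proof.
  intros [[HL HR] W].
  assert (lcan : forall a x y, mul a x = mul a y -> x = y).
  { intros a x y H. destruct (HL a (mul a x)) as [u [_ Hu]].
    rewrite <- (Hu x eq_refl). apply Hu. auto. }
  assert (rcan : forall a x y, mul x a = mul y a -> x = y).
  { intros a x y H. destruct (HR a (mul x a)) as [u [_ Hu]].
    rewrite <- (Hu x eq_refl). apply Hu. auto. }
  assert (lsur : forall a b, exists x, mul a x = b).
  { intros a b. destruct (HL a b) as [u [Hu _]]. eauto. }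
  assert (rsur : forall a b, exists x, mul x a = b).
  { intros a b. destruct (HR a b) as [u [Hu _]]. eauto. }
  set (f := mul e e) in *.
  assert (C : forall s, mul (mul f s) s = e).
  { intros s. destruct (lsur e s) as [z Hz]. destruct (lsur e e) as [y0 Hy0].
    pose proof (W e y0 z) as H. rewrite Hy0, Hz in H. exact H. }
  assert (D : forall y, mul (mul e y) y = e).
  { intros y. pose proof (W (mul e y) y y) as H. rewrite C in H. auto. }
  assert (Hf : f = e).
  { assert (H : mul e f = mul f f) by (apply (rcan f); rewrite D, C; reflexivity).
    symmetry. exact (rcan f _ _ H). }
  assert (Hee : mul e e = e) by exact Hf.
  clearbody f. subst f.
  assert (F : forall u, mul (mul e u) e = u).
  { intros u. destruct (rsur e u) as [x Hx]. pose proof (W x e e) as H.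
    rewrite D, Hx in H. exact H. }
  assert (G : forall y y', mul e (mul (mul e y') y) = mul (mul e y) y').
  { intros y y'. pose proof (W (mul e y) y' y) as H. rewrite D, Hee in H. exact H. }
  assert (B : forall y, mul e (mul e y) = y).
  { intros y. pose proof (G y e) as H. rewrite Hee in H.
    rewrite F in H. exact H. }
  assert (Dm : forall a b, mul e (mul a b) = mul (mul e b) (mul e a)).
  { intros a b. pose proof (G b (mul e a)) as H. rewrite B in H. exact H. }
  assert (Cm : forall a, mul a e = mul e a).
  { intros a. apply (lcan e). rewrite Dm, Hee. reflexivity. }
  split.
  - unfold dual_op. split; intros a b; [apply HR | apply HL].
  - intros x y z. unfold dual_op. rewrite Hee, Cm, (Cm (mul z x)).
    rewrite <- (B (mul (mul z (mul e y)) (mul e (mul z x)))).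
    rewrite (Dm (mul z (mul e y)) (mul e (mul z x))), B.
    rewrite (Dm z (mul e y)), B.
    pose proof (W (mul e x) (mul e y) (mul e z)) as H.
    rewrite (Dm (mul e x) (mul e z)), !B in H. rewrite H, <- Dm, B. reflexivity.
Qed.
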